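(* Let $n\ge1$ and $\vec p,\vec q\in[0,1]^n$. Let $I=\{i\in\{1,\dots,n\}:p_i\ge q_i\}$ and $J=\{1,\dots,n\}\setminus I$, and let $\vec p_I,\vec p_J,\vec q_I,\vec q_J$ be the corresponding subsequences of $\vec p,\vec q$. Then $$\mathrm{TV}(\mathrm{Ber}(\vec p),\mathrm{Ber}(\vec q))\ge\max\big(\mathrm{TV}(\mathrm{Ber}(\vec p_I),\mathrm{Ber}(\vec q_I)),\ \mathrm{TV}(\mathrm{Ber}(\vec p_J),\mathrm{Ber}(\vec q_J))\big)\ge\frac1{12}\max\big(\Phi(\vec p_I,\vec q_I),\Phi(\vec q_J,\vec p_J)\big).$$
   Context: For $\vec r=(r_1,\dots,r_m)\in[0,1]^m$, $\mathrm{Ber}(\vec r)=\mathrm{Ber}(r_1)\otimes\cdots\otimes\mathrm{Ber}(r_m)$ is the product Bernoulli measure on $\{0,1\}^m$. $\mathrm{TV}(P,Q)=\frac12\sum_\omega|P(\omega)-Q(\omega)|$ is the total variation distance. For $\vec a,\vec b\in[0,1]^m$, $\Phi(\vec a,\vec b)=\min\big(1,\Delta/\sqrt{\sigma_{\vec a}^2+1}\big)$ where $\Delta=\sum_{i}|a_i-b_i|$ and $\sigma_{\vec a}^2=\sum_i a_i(1-a_i)$. If $I$ or $J$ is empty, the corresponding TV and $\Phi$ terms are $0$. *)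

(* Defs.v *)
From HB Require Import structures.
From mathcomp Require Import all_boot all_order all_algebra.
From mathcomp Require Import reals.

Import Order.TTheory GRing.Theory Num.Theory.
Local Open Scope ring_scope.

Definition ber {R : realType} (m : nat) (r : seq R) (w : {ffun 'I_m -> bool}) : R :=
  \prod_(i < m) (if w i then r`_i else 1 - r`_i).

(* Total variation distance between Ber(a) and Ber(b), where a, b have length
   m := size a (b is assumed to have the same length). *)
Definition TVber {R : realType} (a b : seq R) : R :=
  2^-1 * \sum_(w : {ffun 'I_(size a) -> bool})
            `|ber (size a) a w - ber (size a) b w|.

Definition Delta {R : realType} (a b : seq R) : R :=
  \sum_(i < size a) `|a`_i - b`_i|.
Definition sigma2 {R : realType} (a : seq R) : R :=
  \sum_(i < size a) a`_i * (1 - a`_i).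
Definition Phi {R : realType} (a b : seq R) : R :=
  Num.min 1 (Delta a b / Num.sqrt (sigma2 a + 1)).

(* Main.v *)
Require Import Defs.
From HB Require Import structures.
From mathcomp Require Import all_boot all_order all_algebra.
From mathcomp Require Import reals ring lra.
Import Order.TTheory GRing.Theory Num.Theory.
Local Open Scope ring_scope.

Fixpoint Ex {R : realType} (a : seq R) (h : seq bool -> R) : R :=
  match a with
  | [::] => h [::]
  | x :: a' => x * Ex a' (fun l => h (true :: l)) + (1 - x) * Ex a' (fun l => h (false :: l))
  end.

Definition in01 {R : realType} (x : R) := (0 <= x) && (x <= 1).

Lemma Ex_ext {R : realType} (a : seq R) h1 h2 :
  (forall l, h1 l = h2 l) -> Ex a h1 = Ex a h2.
Proof.
elim: a h1 h2 => [|x a IH] h1 h2 H /=.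
  exact (H [::]).
congr (_ * _ + _ * _); apply: IH => l.
  exact (H (true :: l)).
exact (H (false :: l)).
Qed.

Lemma Ex_const {R : realType} (a : seq R) c : Ex a (fun _ => c) = c.
Proof. elim: a => [|x a IH]; first done.
simpl. rewrite IH. ring. Qed.

Lemma Ex_sub {R : realType} (a : seq R) h1 h2 :
  Ex a (fun l => h1 l - h2 l) = Ex a h1 - Ex a h2.
Proof.
elim: a h1 h2 => [|x a IH] h1 h2 //=.
rewrite (IH (fun l => h1 (true :: l))) (IH (fun l => h1 (false :: l))); ring.
Qed.

Lemma Ex_mono {R : realType} (a : seq R) h1 h2 :
  all in01 a -> (forall l, h1 l <= h2 l) -> Ex a h1 <= Ex a h2.
Proof.
elim: a h1 h2 => [|x a IH] h1 h2 /=; first by move=> _; apply.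
case/andP => /andP [x0 x1] Ha H.
apply: lerD; apply: ler_wpM2l.
- exact: x0.
- by apply: IH.
- by rewrite subr_ge0.
- by apply: IH.
Qed.

Lemma Ex_mask {R : realType} (a : seq R) (m : bitseq) h :
  Ex (mask m a) h = Ex a (fun l => h (mask m l)).
Proof.
elim: a m h => [|x a IH] m h /=.
  by case: m.
case: m => [|[] m] /=.
- by rewrite !Ex_const; ring.
- by rewrite IH; congr (_ * _ + _ * _); apply: IH.
- by rewrite !IH; ring.
Qed.

Definition fcons {k} (b : bool) (w : {ffun 'I_k -> bool}) : {ffun 'I_k.+1 -> bool} :=
  [ffun i => if unlift ord0 i is Some j then w j else b].

Lemma sum_ffunS {R : realType} k (F : {ffun 'I_k.+1 -> bool} -> R) :
  \sum_(w : {ffun 'I_k.+1 -> bool}) F w =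
  \sum_(b : bool) \sum_(w : {ffun 'I_k -> bool}) F (fcons b w).
Proof.
rewrite pair_big /=.
rewrite (reindex (fun p : bool * {ffun 'I_k -> bool} => fcons p.1 p.2)) //=.
exists (fun w : {ffun 'I_k.+1 -> bool} => (w ord0, [ffun j => w (lift ord0 j)])).
  move=> [b w] _ /=; congr (_, _).
    by rewrite /fcons ffunE unlift_none.
  by apply/ffunP => j; rewrite !ffunE liftK.
move=> w _ /=; apply/ffunP => i; rewrite /fcons ffunE.
by case: (unliftP ord0 i) => [j ->|->]; rewrite ?ffunE.
Qed.

Definition tl {k} (w : {ffun 'I_k -> bool}) : seq bool := [seq w i | i <- enum 'I_k].

Lemma Ex_ffun {R : realType} k (a : seq R) h :
  size a = k ->
  \sum_(w : {ffun 'I_k -> bool}) h (tl w) * ber k a w = Ex a h.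
Proof.
elim: a k h => [|x a IH] [|k] h //= Hs.
  rewrite (eq_bigr (fun _ => h [::])); last first.
    by move=> w _; rewrite /ber big_ord0 mulr1 /tl enum_ord0.
  by rewrite sumr_const card_ffun card_ord expn0 mulr1n.
case: Hs => Hs.
rewrite sum_ffunS big_bool /=.
rewrite -(IH k (fun l => h (true :: l))) // -(IH k (fun l => h (false :: l))) //.
rewrite !mulr_sumr; congr (_ + _); apply: eq_bigr => w _.
  rewrite /tl enum_ordSl /= /fcons ffunE unlift_none -map_comp.
  rewrite /ber big_ord_recl ffunE unlift_none /=.
  rewrite (eq_map (g := w)); last by move=> j /=; rewrite ffunE liftK.
  rewrite (eq_bigr (fun i : 'I_k => if w i then a`_i else 1 - a`_i)); first ring.
  by move=> i _; rewrite ffunE liftK.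
rewrite /tl enum_ordSl /= /fcons ffunE unlift_none -map_comp.
rewrite /ber big_ord_recl ffunE unlift_none /=.
rewrite (eq_map (g := w)); last by move=> j /=; rewrite ffunE liftK.
rewrite (eq_bigr (fun i : 'I_k => if w i then a`_i else 1 - a`_i)); first ring.
by move=> i _; rewrite ffunE liftK.
Qed.

Lemma sum_ber1 {R : realType} k (a : seq R) :
  size a = k -> \sum_(w : {ffun 'I_k -> bool}) ber k a w = 1.
Proof.
move=> Hs; rewrite -(Ex_const a 1) -(Ex_ffun k a (fun _ => 1)) //.
by apply: eq_bigr => w _; rewrite mul1r.
Qed.

Lemma TV_test {R : realType} (a b : seq R) f :
  size b = size a -> (forall l, 0 <= f l <= 1) ->
  Ex a f - Ex b f <= TVber a b /\ Ex b f - Ex a f <= TVber a b.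
Proof.
move=> Hs Hf.
rewrite -(Ex_ffun (size a) a f) // -(Ex_ffun (size a) b f) //.
have E : \sum_(w : {ffun 'I_(size a) -> bool}) (ber (size a) a w - ber (size a) b w) = 0.
  by rewrite sumrB !sum_ber1 // subrr.
rewrite /TVber -!sumrB; split.
- apply: le_trans (_ : \sum_w (2^-1 * `|ber (size a) a w - ber (size a) b w| +
                         2^-1 * (ber (size a) a w - ber (size a) b w)) <= _).
    apply: ler_sum => w _.
    move: (ber (size a) a w) (ber (size a) b w) (Hf (tl w)) => x y /andP [f0 f1].
    have [hx|hx] := leP 0 (x - y).
      rewrite ger0_norm //; nra.
    rewrite ltr0_norm //; nra.
  by rewrite big_split /= -!mulr_sumr E mulr0 addr0.
- apply: le_trans (_ : \sum_w (2^-1 * `|ber (size a) a w - ber (size a) b w| -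
                         2^-1 * (ber (size a) a w - ber (size a) b w)) <= _).
    apply: ler_sum => w _.
    move: (ber (size a) a w) (ber (size a) b w) (Hf (tl w)) => x y /andP [f0 f1].
    have [hx|hx] := leP 0 (x - y).
      rewrite ger0_norm //; nra.
    rewrite ltr0_norm //; nra.
  by rewrite sumrB -!mulr_sumr E mulr0 subr0.
Qed.

Definition fl k (l : seq bool) : {ffun 'I_k -> bool} := [ffun i : 'I_k => nth false l (nat_of_ord i)].

Lemma fl_tl k (w : {ffun 'I_k -> bool}) : fl k (tl w) = w.
Proof.
apply/ffunP => i; rewrite ffunE /tl (nth_map i) ?size_enum_ord //.
by rewrite nth_ord_enum.
Qed.

Lemma TV_eq {R : realType} (a b : seq R) :
  size b = size a ->
  exists f, (forall l, 0 <= f l <= 1) /\ TVber a b = Ex a f - Ex b f.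
Proof.
move=> Hs.
exists (fun l => if ber (size a) b (fl (size a) l) <= ber (size a) a (fl (size a) l)
                 then 1 else 0); split.
  by move=> l; case: ifP => _; rewrite ?lexx ?ler01.
have E : \sum_(w : {ffun 'I_(size a) -> bool}) (ber (size a) a w - ber (size a) b w) = 0.
  by rewrite sumrB !sum_ber1 // subrr.
rewrite -(Ex_ffun (size a) a) // -(Ex_ffun (size a) b) // -sumrB /TVber.
transitivity (2^-1 * \sum_w `|ber (size a) a w - ber (size a) b w| +
   2^-1 * \sum_(w : {ffun 'I_(size a) -> bool}) (ber (size a) a w - ber (size a) b w)).
  by rewrite E mulr0 addr0.
rewrite -mulrDr -big_split mulr_sumr.
apply: eq_bigr => w _; rewrite /= fl_tl.
case: ifP => H.
  by rewrite ger0_norm ?subr_ge0 //; field.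
have H' : ber (size a) a w - ber (size a) b w < 0.
  by rewrite subr_lt0 ltNge H.
by rewrite ltr0_norm //; field.
Qed.

Fixpoint sumb {R : realType} (l : seq bool) : R :=
  match l with [::] => 0 | b :: l' => (if b then 1 else 0) + sumb l' end.
Fixpoint mu {R : realType} (a : seq R) : R :=
  match a with [::] => 0 | x :: a' => x + mu a' end.
Fixpoint sg {R : realType} (a : seq R) : R :=
  match a with [::] => 0 | x :: a' => x * (1 - x) + sg a' end.

Lemma Ex_scale {R : realType} (a : seq R) K h :
  Ex a (fun l => K * h l) = K * Ex a h.
Proof.
elim: a h => [|x a IH] h //=.
rewrite (IH (fun l => h (true :: l))) (IH (fun l => h (false :: l))); ring.
Qed.

Lemma Ex_shift {R : realType} (a : seq R) (F : R -> R) c :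
  Ex a (fun l => F (c + sumb l)) =
  match a with [::] => F c | x :: a' =>
    x * Ex a' (fun l => F ((c + 1) + sumb l)) + (1 - x) * Ex a' (fun l => F (c + sumb l)) end.
Proof.
case: a => [|x a] /=; first by rewrite addr0.
congr (_ * _ + _ * _); apply: Ex_ext => l; congr F; ring.
Qed.

Lemma Ex_sq {R : realType} (a : seq R) c t :
  Ex a (fun l => (c + sumb l - t) ^+ 2) = (c + mu a - t) ^+ 2 + sg a.
Proof.
elim: a c => [|x a IH] c /=; first by rewrite !addr0.
have := Ex_shift (x :: a) (fun u => (u - t) ^+ 2) c => /= ->.
rewrite !IH; ring.
Qed.

Definition Qf {R : realType} (k K t : R) (a : seq R) (c : R) : R :=
  k - K * ((c + mu a - t) ^+ 2 + sg a).

Fixpoint Bf {R : realType} (k K t : R) (a b : seq R) (c : R) : R :=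
  match a, b with
  | x :: a', y :: b' => (x - y) * Qf k K t a' c + y * Bf k K t a' b' (c + 1)
                        + (1 - y) * Bf k K t a' b' c
  | _, _ => 0
  end.

Definition rl {R : realType} (x y : R) := [&& 0 <= y, y <= x & x <= 1].

Lemma all2_in01 {R : realType} (a b : seq R) :
  all2 rl a b -> all in01 a && all in01 b.
Proof.
elim: a b => [|x a IH] [|y b] //= /andP [/and3P [y0 yx x1] H].
case/andP: (IH _ H) => -> ->; rewrite /in01 y0 x1 /=.
rewrite (le_trans y0 yx) (le_trans yx x1) //.
Qed.

Lemma step1 {R : realType} (k K t : R) (g : R -> R) (a b : seq R) :
  (forall u, k - K * (u - t) ^+ 2 <= g (u + 1) - g u) ->
  all2 rl a b ->
  forall c, Bf k K t a b c <=
    Ex a (fun l => g (c + sumb l)) - Ex b (fun l => g (c + sumb l)).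
Proof.
move=> Hg; elim: a b => [|x a IH] [|y b] //=; first by move=> _ c; rewrite subrr.
move=> H c.
case/andP: H => /and3P [y0 yx x1] H.
have /andP [Ha Hb] := all2_in01 _ _ H.
have := Ex_shift (x :: a) g c => /= ->.
have := Ex_shift (y :: b) g c => /= ->.
set A1 := Ex a _; set A0 := Ex a _; set B1 := Ex b _; set B0 := Ex b _.
have hQ : Qf k K t a c <= A1 - A0.
  rewrite /A1 /A0 -Ex_sub /Qf -Ex_sq -Ex_scale -{1}(Ex_const a k) -Ex_sub.
  apply: Ex_mono => // l.
  have -> : c + 1 + sumb l = (c + sumb l) + 1 by ring.
  exact: Hg.
have h1 : (x - y) * Qf k K t a c <= (x - y) * (A1 - A0).
  by apply: ler_wpM2l; rewrite ?subr_ge0.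
have h2 : y * Bf k K t a b (c + 1) <= y * (A1 - B1).
  by apply: ler_wpM2l => //; apply: IH.
have h3 : (1 - y) * Bf k K t a b c <= (1 - y) * (A0 - B0).
  by apply: ler_wpM2l => //; [rewrite subr_ge0 (le_trans yx x1) | apply: IH].
have -> : x * A1 + (1 - x) * A0 - (y * B1 + (1 - y) * B0) =
  (x - y) * (A1 - A0) + y * (A1 - B1) + (1 - y) * (A0 - B0) by ring.
by apply: lerD => //; apply: lerD.
Qed.

Lemma step2 {R : realType} (k K t : R) (a b : seq R) :
  all2 rl a b ->
  exists be ga, forall c, Bf k K t a b c = - K * (mu a - mu b) * c ^+ 2 + be * c + ga.
Proof.
elim: a b => [|x a IH] [|y b] //=.
  by move=> _; exists 0, 0 => c; rewrite subrr; ring.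
case/andP => _ /IH [be [ga Hc]].
exists (- 2 * (x - y) * K * (mu a - t) + 2 * y * (- K * (mu a - mu b)) + be).
exists ((x - y) * (k - K * ((mu a - t) ^+ 2 + sg a)) + y * (- K * (mu a - mu b) + be + ga)
        + (1 - y) * ga).
move=> c; rewrite !Hc /Qf; ring.
Qed.

Lemma mu_le {R : realType} (a b : seq R) : all2 rl a b -> mu b <= mu a.
Proof.
elim: a b => [|x a IH] [|y b] //= /andP [/and3P [_ yx _] /IH H].
exact: lerD.
Qed.

Lemma sq_interval {R : realType} (lo s hi t : R) :
  lo <= s -> s <= hi -> (s - t) ^+ 2 <= Num.max ((lo - t) ^+ 2) ((hi - t) ^+ 2).
Proof.
move=> H1 H2; rewrite le_max.
have [Ht|Ht] := leP t s.
  apply/orP; right; nra.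
apply/orP; left; nra.
Qed.

Lemma step3 {R : realType} (k K t : R) (a b : seq R) :
  0 <= k -> 0 <= K -> all2 rl a b ->
  forall c, k * (mu a - mu b) - K * (mu a - mu b) *
     (Num.max ((c + mu b - 1 - t) ^+ 2) ((c + mu a - t) ^+ 2) + sg a + (mu a - mu b))
     <= Bf k K t a b c.
Proof.
move=> k0 K0; elim: a b => [|x a IH] [|y b] //=.
  by move=> _ c; rewrite subrr !mulr0 mul0r subrr.
move=> H c.
case/andP: H => /and3P [y0 yx x1] H.
have [be [ga Hc]] := step2 k K t a b H.
have mix : y * Bf k K t a b (c + 1) + (1 - y) * Bf k K t a b c =
           Bf k K t a b (c + y) - K * (mu a - mu b) * (y * (1 - y)).
  rewrite !Hc; ring.
rewrite [X in _ <= X](_ : _ = (x - y) * Qf k K t a c + (Bf k K t a b (c + y) - K * (mu a - mu b) * (y * (1 - y)))); last by rewrite -mix addrA.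
have IHc := IH b H (c + y).
have mab := mu_le _ _ H.
set D := mu a - mu b in IHc mix *.
have D0 : 0 <= D by rewrite subr_ge0.
set Mx := Num.max _ _.
have P1 : (c + mu a - t) ^+ 2 <= Mx.
  apply: sq_interval; lra.
have P2 : Num.max ((c + y + mu b - 1 - t) ^+ 2) ((c + y + mu a - t) ^+ 2) <= Mx.
  rewrite ge_max; apply/andP; split.
    have -> : c + y + mu b - 1 = c + (y + mu b) - 1 by ring.
    by rewrite le_max lexx.
  apply: sq_interval; lra.
have P3 : y * (1 - y) <= x * (1 - x) + (x - y) by nra.
have sg0 : 0 <= sg a.
  have /andP [Ha _] := all2_in01 _ _ H.
  elim: (a) Ha => [|z a' IHa] //= /andP [/andP [z0 z1] /IHa h].
  apply: addr_ge0 => //; apply: mulr_ge0 => //; by rewrite subr_ge0.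
have xx0 : 0 <= x * (1 - x).
  apply: mulr_ge0; [exact: le_trans y0 yx|by rewrite subr_ge0].
rewrite /Qf.
set m1 := Num.max _ _ in IHc P2.
set Ps := (c + mu a - t) ^+ 2 in P1 *.
have E1 : K * (x - y) * (Ps + sg a) <= K * (x - y) * (Mx + (x * (1 - x) + sg a) + (x - y + D)).
  apply: ler_wpM2l; first by apply: mulr_ge0 => //; rewrite subr_ge0.
  lra.
have E2 : K * D * (m1 + sg a + D + y * (1 - y)) <=
          K * D * (Mx + (x * (1 - x) + sg a) + (x - y + D)).
  apply: ler_wpM2l; first exact: mulr_ge0.
  lra.
have -> : x + mu a - (y + mu b) = x - y + D by rewrite /D; ring.
nra.
Qed.

Definition cl {R : realType} (v : R) := Num.min 1 (Num.max 0 v).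

Lemma cl01 {R : realType} (v : R) : 0 <= cl v <= 1.
Proof.
by rewrite /cl le_min ge_min lexx ler01 le_max lexx /=.
Qed.

Lemma cl_lo {R : realType} (v : R) : v <= 0 -> cl v = 0.
Proof. by move=> h; rewrite /cl (max_l h) (min_r ler01). Qed.

Lemma cl_hi {R : realType} (v : R) : 1 <= v -> cl v = 1.
Proof.
move=> h; have h0 : 0 <= v by apply: le_trans h; exact: ler01.
by rewrite /cl (max_r h0) (min_l h).
Qed.

Lemma cl_mid {R : realType} (v : R) : 0 <= v -> v <= 1 -> cl v = v.
Proof. by move=> h0 h1; rewrite /cl (max_r h0) (min_r h1). Qed.

Lemma cl_val {R : realType} (v : R) :
  (v <= 0 /\ cl v = 0) \/ (1 <= v /\ cl v = 1) \/ (0 <= v /\ v <= 1 /\ cl v = v).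
Proof.
have [h0|h0] := leP v 0; first by left; split => //; exact: cl_lo.
have [h1|h1] := leP v 1; last by right; left; split; [exact: ltW|exact: cl_hi (ltW h1)].
by right; right; split; [exact: ltW|split; [done|exact: cl_mid (ltW h0) h1]].
Qed.

Lemma cl_mono {R : realType} (v e : R) : 0 <= e -> 0 <= cl (v + e) - cl v.
Proof.
move=> e0.
case: (cl_val v) => [[h1 ->]|[[h1 ->]|[h1 [h2 ->]]]];
case: (cl_val (v + e)) => [[h3 ->]|[[h3 ->]|[h3 [h4 ->]]]]; lra.
Qed.

Lemma cl_lin {R : realType} (v e : R) : 0 <= v -> v + e <= 1 -> 0 <= e ->
  cl (v + e) - cl v = e.
Proof.
move=> H0 H1 e0; rewrite cl_mid ?cl_mid //; try lra.
Qed.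

Lemma Delta_cons {R : realType} (x y : R) a b :
  Delta (x :: a) (y :: b) = `|x - y| + Delta a b.
Proof. by rewrite /Delta /= big_ord_recl. Qed.

Lemma sigma2_cons {R : realType} (x : R) a :
  sigma2 (x :: a) = x * (1 - x) + sigma2 a.
Proof. by rewrite /sigma2 /= big_ord_recl. Qed.

Lemma Delta_rl {R : realType} (a b : seq R) : all2 rl a b -> Delta a b = mu a - mu b.
Proof.
elim: a b => [|x a IH] [|y b] //=.
  by move=> _; rewrite /Delta big_ord0 subrr.
case/andP => /and3P [_ yx _] /IH H.
rewrite Delta_cons H ger0_norm ?subr_ge0 //; ring.
Qed.

Lemma sigma2_sg {R : realType} (a : seq R) : sigma2 a = sg a.
Proof.
elim: a => [|x a IH] /=; first by rewrite /sigma2 big_ord0.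
by rewrite sigma2_cons IH.
Qed.

Lemma sg_ge0 {R : realType} (a : seq R) : all in01 a -> 0 <= sg a.
Proof.
elim: a => [|z a' IHa] //= /andP [/andP [z0 z1] /IHa h].
apply: addr_ge0 => //; apply: mulr_ge0 => //; by rewrite subr_ge0.
Qed.

Lemma lemC {R : realType} (a b : seq R) :
  all2 rl a b ->
  exists f, (forall l, 0 <= f l <= 1) /\ 12^-1 * Phi a b <= Ex a f - Ex b f.
Proof.
move=> H.
have /andP [Ha Hb] := all2_in01 _ _ H.
have s0 := sg_ge0 _ Ha.
have mab := mu_le _ _ H.
set D := mu a - mu b.
have D0 : 0 <= D by rewrite subr_ge0.
set s := sg a.
set r := Num.sqrt (s + 1).
have r2 : r ^+ 2 = s + 1 by rewrite sqr_sqrtr // addr_ge0.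
have r1 : 1 <= r by rewrite -(sqrtr1 R) ler_sqrt ?addr_ge0 // lerDr.
set M := Num.max D r.
have MD : D <= M by rewrite le_max lexx.
have Mr : r <= M by rewrite le_max lexx orbT.
have M1 : 1 <= M := le_trans r1 Mr.
have M0 : 0 < M by lra.
set d := 3 * M.
have d0 : 0 < d by rewrite /d; lra.
set k := (2 * d + 1)^-1.
have k0 : 0 < k by rewrite invr_gt0; lra.
set K := k / d ^+ 2.
have K0 : 0 <= K by apply: divr_ge0; [lra|apply: sqr_ge0].
set t := (mu a + mu b - 1) / 2.
set lo := t - d.
pose g u := cl ((u - lo) * k).
have Hg : forall u, k - K * (u - t) ^+ 2 <= g (u + 1) - g u.
  move=> u; rewrite /g.
  have -> : (u + 1 - lo) * k = (u - lo) * k + k by ring.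
  have Kq : K * (u - t) ^+ 2 = k * ((u - t) ^+ 2 / d ^+ 2).
    by rewrite /K; field; rewrite gt_eqF.
  have Kp : 0 <= K * (u - t) ^+ 2 by apply: mulr_ge0 => //; apply: sqr_ge0.
  have [Hu|Hu] := leP ((u - t) ^+ 2) (d ^+ 2).
    have hb1 : u - t <= d by nra.
    have hb2 : - d <= u - t by nra.
    have e : (2 * d + 1) * k = 1 by rewrite /k mulfV // gt_eqF //; lra.
    rewrite cl_lin; first lra.
    + apply: mulr_ge0; rewrite /lo; lra.
    + have -> : (u - lo) * k + k = (u - lo + 1) * k by ring.
      rewrite -e; apply: ler_wpM2r; rewrite /lo; lra.
    + lra.
  have q1 : 1 <= (u - t) ^+ 2 / d ^+ 2.
    rewrite ler_pdivlMr ?mul1r; first exact: ltW.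
    by apply: exprn_gt0.
  have : k <= K * (u - t) ^+ 2 by rewrite Kq; nra.
  have := cl_mono ((u - lo) * k) k (ltW k0); lra.
have H1 := step1 k K t g _ _ Hg H 0.
have H3 := step3 k K t a b (ltW k0) K0 H 0.
exists (fun l => g (0 + sumb l)); split; first by move=> l; exact: cl01.
apply: le_trans H1; apply: le_trans H3.
rewrite -/D -/s.
have e1 : (0 + mu b - 1 - t) ^+ 2 = ((D + 1) / 2) ^+ 2 by rewrite /t /D; field.
have e2 : (0 + mu a - t) ^+ 2 = ((D + 1) / 2) ^+ 2 by rewrite /t /D; field.
rewrite e1 e2 maxxx.
set X := ((D + 1) / 2) ^+ 2 + s + D.
have X3 : X <= 3 * M ^+ 2.
  have : s + 1 <= M ^+ 2 by rewrite -r2; nra.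
  rewrite /X; nra.
have KM : K * (3 * M ^+ 2) = k / 3 by rewrite /K /d; field; lra.
have E1 : K * D * X <= k / 3 * D.
  rewrite -KM mulrAC; apply: ler_wpM2r => //; apply: ler_wpM2l => //.
have Phi_le : Phi a b <= D / M.
  rewrite /Phi Delta_rl // sigma2_sg -/D -/s -/r /M.
  have [Hdr|Hdr] := leP D r.
    by rewrite ge_min lexx orbT.
  rewrite divff ?ge_min ?lexx //; rewrite gt_eqF //; lra.
have E2 : 12^-1 * (D / M) <= 2 / 3 * k * D.
  rewrite mulrA mulrAC; apply: ler_wpM2r => //.
  rewrite -subr_ge0.
  have -> : 2 / 3 * k - 12^-1 / M = (6 * M - 3) / (36 * M * (6 * M + 1)).
    rewrite /k /d; field; lra.
  apply: divr_ge0; first lra.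
  apply: mulr_ge0; lra.
have : 12^-1 * Phi a b <= 12^-1 * (D / M) by apply: ler_wpM2l => //; rewrite invr_ge0.
lra.
Qed.

Lemma marg {R : realType} (m : bitseq) (a b : seq R) :
  size b = size a -> size m = size a ->
  TVber (mask m a) (mask m b) <= TVber a b.
Proof.
move=> Hs Hm.
have Hs' : size (mask m b) = size (mask m a) by rewrite !size_mask // Hs.
have [f [f01 ->]] := TV_eq _ _ Hs'.
rewrite !Ex_mask.
have [h _] := TV_test a b (fun l => f (mask m l)) Hs (fun l => f01 _).
exact: h.
Qed.

Lemma all2_map {R : realType} n (p q : 'I_n -> R) (l : seq 'I_n) :
  (forall i, i \in l -> rl (p i) (q i)) ->
  all2 rl [seq p i | i <- l] [seq q i | i <- l].
Proof.
elim: l => [|i l IH] //= H.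
rewrite H ?mem_head //= IH // => j jl; apply: H; by rewrite in_cons jl orbT.
Qed.

Theorem theorem3 (R : realType) (n : nat) (p q : 'I_n -> R) :
  (1 <= n)%N ->
  (forall i, 0 <= p i <= 1) -> (forall i, 0 <= q i <= 1) ->
  let I := [seq i <- enum 'I_n | q i <= p i] in
  let J := [seq i <- enum 'I_n | ~~ (q i <= p i)] in
  let pv := [seq p i | i <- enum 'I_n] in
  let qv := [seq q i | i <- enum 'I_n] in
  let pI := [seq p i | i <- I] in
  let qI := [seq q i | i <- I] in
  let pJ := [seq p i | i <- J] in
  let qJ := [seq q i | i <- J] in
  Num.max (TVber pI qI) (TVber pJ qJ) <= TVber pv qv /\
  12^-1 * Num.max (Phi pI qI) (Phi qJ pJ) <= Num.max (TVber pI qI) (TVber pJ qJ).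
Proof.
move=> _ Hp Hq I J pv qv pI qI pJ qJ.
have Hs : size qv = size pv by rewrite !size_map.
have eI : forall (f : 'I_n -> R), [seq f i | i <- I] =
    mask [seq q i <= p i | i <- enum 'I_n] [seq f i | i <- enum 'I_n].
  by move=> f; rewrite /I filter_mask map_mask.
have eJ : forall (f : 'I_n -> R), [seq f i | i <- J] =
    mask [seq ~~ (q i <= p i) | i <- enum 'I_n] [seq f i | i <- enum 'I_n].
  by move=> f; rewrite /J filter_mask map_mask.
split.
  rewrite ge_max; apply/andP; split.
    rewrite /pI /qI !eI; apply: marg => //; by rewrite !size_map.
  rewrite /pJ /qJ !eJ; apply: marg => //; by rewrite !size_map.
have HI : all2 rl pI qI.
  apply: all2_map => i; rewrite mem_filter => /andP [h _].
  case/andP: (Hp i) => p0 p1; case/andP: (Hq i) => q0 q1.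
  by rewrite /rl q0 h p1.
have HJ : all2 rl qJ pJ.
  apply: all2_map => i; rewrite mem_filter => /andP [h _].
  case/andP: (Hp i) => p0 p1; case/andP: (Hq i) => q0 q1.
  by rewrite /rl p0 q1 andbT ltW // ltNge.
have [fI [fI01 LI]] := lemC _ _ HI.
have [fJ [fJ01 LJ]] := lemC _ _ HJ.
have SI : size qI = size pI by rewrite !size_map.
have SJ : size qJ = size pJ by rewrite !size_map.
have [TI _] := TV_test pI qI fI SI fI01.
have [_ TJ] := TV_test pJ qJ fJ SJ fJ01.
have AI : 12^-1 * Phi pI qI <= TVber pI qI := le_trans LI TI.
have AJ : 12^-1 * Phi qJ pJ <= TVber pJ qJ := le_trans LJ TJ.
have [h|h] := leP (Phi pI qI) (Phi qJ pJ).
  by rewrite le_max AJ orbT.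
by rewrite le_max AI.
Qed.
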